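(* Let $n\ge 2$. Among all simple directed graphs with $n$ vertices and $n-1$ arcs, the maximal algebraic connectivity is $1$, and a simple directed graph with $n$ vertices and $n-1$ arcs has algebraic connectivity $1$ if and only if it is a directed tree.
   Context: A simple directed graph has no self-arcs and no repeated arcs; an arc $(j,i)$ goes from $j$ to $i$. The (in-degree) Laplacian of a directed graph $\mathbb G$ on vertices $\{1,\dots,n\}$ is $L(\mathbb G)=D-A$, where $D$ is the diagonal matrix of in-degrees and $A_{ij}=1$ if $(j,i)$ is an arc and $0$ otherwise. Its eigenvalues, counted with algebraic multiplicity, have real parts $0={\rm Re}(\lambda_1)\le {\rm Re}(\lambda_2)\le\cdots\le{\rm Re}(\lambda_n)$; the algebraic connectivity is $a(\mathbb G)={\rm Re}(\lambda_2)$, the second smallest real part. A vertex $r$ is a root if there is a directed path from $r$ to every other vertex; a graph is rooted if it has a root. An $n$-vertex directed tree is a rooted directed graph with $n$ vertices and $n-1$ arcs. *)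

(* Defs.v *)
From mathcomp Require Import all_boot all_order all_algebra all_field.
Set Implicit Arguments. Unset Strict Implicit. Unset Printing Implicit Defensive.
Import Order.TTheory GRing.Theory Num.Theory.
Local Open Scope ring_scope.

(* A directed graph on vertex set 'I_n is given by its arc relation
   [arc j i] meaning "there is an arc (j,i) from j to i".
   Simple = no self-arcs (irreflexive); repeated arcs are impossible
   in this representation. *)

Definition simple_digraph n (arc : rel 'I_n) : Prop := irreflexive arc.

Definition num_arcs n (arc : rel 'I_n) : nat :=
  #|[set p : 'I_n * 'I_n | arc p.1 p.2]|.

Definition indeg n (arc : rel 'I_n) (i : 'I_n) : nat :=
  #|[set j : 'I_n | arc j i]|.

Definition laplacian n (arc : rel 'I_n) : 'M[algC]_n :=
  \matrix_(i, j) ((indeg arc i)%:R *+ (i == j) - (arc j i)%:R).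

(* eigenvalues of a square matrix, listed with algebraic multiplicity:
   the roots of its characteristic polynomial (which splits over algC) *)
Definition eigenvalues n (M : 'M[algC]_n) : seq algC :=
  sval (closed_field_poly_normal (char_poly M)).

Definition sorted_re_eigs n (M : 'M[algC]_n) : seq algC :=
  sort <=%R [seq 'Re z | z <- eigenvalues M].

Definition alg_connectivity n (arc : rel 'I_n) : algC :=
  nth 0 (sorted_re_eigs (laplacian arc)) 1.

Definition is_root n (arc : rel 'I_n) (r : 'I_n) : Prop :=
  forall v, connect arc r v.

Definition rooted n (arc : rel 'I_n) : Prop := exists r, is_root arc r.

Definition directed_tree n (arc : rel 'I_n) : Prop :=
  rooted arc /\ num_arcs arc = n.-1.

(* Main.v *)
Require Import Defs.
From mathcomp Require Import all_boot all_order all_algebra all_field zify.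
Set Implicit Arguments. Unset Strict Implicit. Unset Printing Implicit Defensive.
Import Order.TTheory GRing.Theory Num.Theory.
Local Open Scope ring_scope.

Lemma eigenvaluesE n (M : 'M[algC]_n) :
  char_poly M = \prod_(z <- eigenvalues M) ('X - z%:P).
Proof.
rewrite /eigenvalues; case: (closed_field_poly_normal _) => r /= ->.
by rewrite (monicP (char_poly_monic M)) scale1r.
Qed.

Lemma size_eigenvalues n (M : 'M[algC]_n) : size (eigenvalues M) = n.
Proof.
have := size_char_poly M; rewrite eigenvaluesE size_prod_XsubC.
by case.
Qed.

Lemma sum_eigenvalues n (M : 'M[algC]_n) : (0 < n)%N ->
  \sum_(z <- eigenvalues M) z = \tr M.
Proof.
move=> n0; have := char_poly_trace M n0; rewrite eigenvaluesE.
have -> : n.-1 = (size (eigenvalues M)).-1 by rewrite size_eigenvalues.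
rewrite coefPn_prod_XsubC ?size_eigenvalues -?lt0n //.
by move/eqP; rewrite eqr_opp => /eqP.
Qed.

Lemma char_poly_tr n (M : 'M[algC]_n) : char_poly M^T = char_poly M.
Proof.
rewrite /char_poly -det_tr; congr (\det _).
apply/matrixP => i j; rewrite !mxE; congr (_ - _).
by rewrite eq_sym.
Qed.

Lemma eigvec n (M : 'M[algC]_n) z : z \in eigenvalues M ->
  exists2 v : 'I_n -> algC, (exists i, v i != 0) &
     forall i, \sum_j M i j * v j = z * v i.
Proof.
move=> zin.
have : eigenvalue M^T z.
  by rewrite eigenvalue_root_char char_poly_tr eigenvaluesE root_prod_XsubC.
move/eigenvalueP => [v vM vn0].
exists (fun j => v 0 j).
  apply/existsP; rewrite -negb_forall; apply: contra vn0 => /forallP H.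
  by apply/eqP/rowP => j; rewrite mxE; apply/eqP/H.
move=> i; have := congr1 (fun A : 'rV_n => A 0 i) vM; rewrite !mxE => <-.
by apply: eq_bigr => j _; rewrite mxE mulrC.
Qed.

Lemma indegE n (arc : rel 'I_n) i :
  (indeg arc i)%:R = \sum_(j | arc j i) (1 : algC).
Proof.
rewrite /indeg -sum1_card natr_sum; apply: eq_bigl => j; by rewrite inE.
Qed.

Lemma lap_row n (arc : rel 'I_n) i (v : 'I_n -> algC) :
  \sum_j laplacian arc i j * v j = \sum_(j | arc j i) (v i - v j).
Proof.
rewrite sumrB.
rewrite [X in _ = X - _](_ : _ = (indeg arc i)%:R * v i); last first.
  by rewrite indegE mulr_suml; apply: eq_bigr => j _; rewrite mul1r.
rewrite (eq_bigr (fun j => ((indeg arc i)%:R *+ (i == j)) * v j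
   - (arc j i)%:R * v j)); last by move=> j _; rewrite mxE mulrBl.
rewrite sumrB (bigD1 i) //= eqxx big1 ?addr0; last first.
  by move=> j /negbTE; rewrite eq_sym => ->; rewrite mulr0n mul0r.
congr (_ - _); rewrite (big_mkcond (fun j => arc j i)) /=.
by apply: eq_bigr => j _; case: (arc j i); rewrite ?mul1r ?mul0r.
Qed.

Lemma card_set_sum (T : finType) (P : pred T) :
  #|[set x | P x]| = (\sum_x (P x : nat))%N.
Proof.
rewrite -sum1_card [RHS](bigID P) /=.
rewrite [X in (_ = _ + X)%N]big1 ?addn0; last by move=> p /negbTE ->.
by apply: eq_big => [p|p]; rewrite ?inE // => ->.
Qed.

Lemma num_arcsE n (arc : rel 'I_n) :
  num_arcs arc = (\sum_i indeg arc i)%N.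
Proof.
rewrite /num_arcs /indeg card_set_sum.
rewrite -(pair_bigA _ (fun j i => (arc j i : nat))) exchange_big /=.
by apply: eq_bigr => i _; rewrite card_set_sum.
Qed.

Lemma trace_lap n (arc : rel 'I_n) : simple_digraph arc ->
  \tr (laplacian arc) = (num_arcs arc)%:R.
Proof.
move=> hs; rewrite num_arcsE natr_sum /mxtrace; apply: eq_bigr => i _.
by rewrite mxE eqxx mulr1n (hs i) subr0.
Qed.

Lemma Re_ge0_of (z : algC) (d : nat) : `|z - d%:R| <= d%:R -> 0 <= 'Re z.
Proof.
move=> h.
have hR : 'Re (d%:R : algC) = d%:R by apply/Creal_ReP; apply: realn.
have e : 'Re z = 'Re (z - d%:R) + d%:R by rewrite raddfB /= hR subrK.
have h1 : - 'Re (z - d%:R) <= d%:R.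
  rewrite -raddfN /= opprB; apply: le_trans (h).
  by rewrite -normrN opprB; apply: (le_trans (leif_Re_Creal _)).
by rewrite e -lerBlDr sub0r lerNl.
Qed.

Lemma gersh n (arc : rel 'I_n) (z : algC) (v : 'I_n -> algC) :
  (exists i, v i != 0) ->
  (forall i, \sum_j laplacian arc i j * v j = z * v i) -> 0 <= 'Re z.
Proof.
move=> [i0 vi0] hv.
have [i _ imax] := @real_arg_maxP _ _ i0 xpredT (fun i => `|v i|) erefl
  (fun i _ => normr_real _).
have vi : 0 < `|v i|.
  by apply: lt_le_trans (imax i0 erefl); rewrite normr_gt0.
apply: (@Re_ge0_of z (indeg arc i)).
have e : (z - (indeg arc i)%:R) * v i = - \sum_(j | arc j i) v j.
  rewrite mulrBl -hv lap_row sumrB indegE mulr_suml.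
  under [X in _ - X]eq_bigr do rewrite mul1r.
  by rewrite addrAC subrr add0r.
rewrite -(ler_pM2r vi) -normrM e normrN.
apply: le_trans (ler_norm_sum _ _ _) _.
rewrite indegE mulr_suml; apply: ler_sum => j _.
by rewrite mul1r; apply: imax.
Qed.

Lemma connect_pred (T : finType) (e : rel T) r x : connect e r x -> x != r ->
  exists y, e y x.
Proof.
move/connectP => [p pth ->]; case/lastP: p pth => [|p y] pth /=.
  by rewrite eqxx.
rewrite rcons_path in pth; case/andP: pth => _ h _; rewrite last_rcons.
by exists (last r p).
Qed.

Lemma connect_ind (T : finType) (e : rel T) (P : T -> Prop) r :
  P r -> (forall y x, e y x -> P y -> P x) -> forall x, connect e r x -> P x.
Proof.
move=> Pr step x /connectP [p pth ->]; elim: p r Pr pth => [|a p IH] r Pr //=.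
by case/andP=> era pth; apply: (IH a) => //; apply: step Pr.
Qed.

Lemma tree_degrees n (arc : rel 'I_n) r : is_root arc r -> num_arcs arc = n.-1 ->
  forall i, indeg arc i = (i != r).
Proof.
move=> hr hm.
have pos : forall i, ((i != r) <= indeg arc i)%N.
  move=> i; case: eqP => //= /eqP ir.
  have [y hy] := connect_pred (hr i) ir.
  by apply/card_gt0P; exists y; rewrite inE.
have s1 : (\sum_i (i != r : nat))%N = n.-1.
  rewrite -card_set_sum.
  have -> : [set x | x != r] = [set~ r] by apply/setP=> x; rewrite !inE.
  by rewrite cardsC1 card_ord.
have : (\sum_i (indeg arc i - (i != r)))%N == 0%N.
  by rewrite sumnB // -num_arcsE hm s1 subnn.
rewrite sum_nat_eq0 => /forallP h i.
have := h i; rewrite /= subn_eq0 => h2.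
by apply/eqP; rewrite eqn_leq h2 pos.
Qed.

Lemma sum_in_arcs n (arc : rel 'I_n) x (F : 'I_n -> algC) :
  \sum_(j | arc j x) F j = \sum_(j in [set j | arc j x]) F j.
Proof. by apply: eq_bigl => j; rewrite inE. Qed.

Lemma tree_eig n (arc : rel 'I_n) r (z : algC) (v : 'I_n -> algC) :
  is_root arc r -> num_arcs arc = n.-1 ->
  (exists i, v i != 0) ->
  (forall i, \sum_j laplacian arc i j * v j = z * v i) -> z = 0 \/ z = 1.
Proof.
move=> hr hm [i0 vi0] hv.
have deg := tree_degrees hr hm.
case: (z =P 0) => [|z0]; first by left.
case: (z =P 1) => [|z1]; first by right.
exfalso; move: vi0; apply/negP; rewrite negbK; apply/eqP.
apply: (connect_ind (P := fun x => v x = 0)) (hr i0).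
  have := hv r; rewrite lap_row sum_in_arcs.
  have /cards0_eq -> : #|[set j | arc j r]| = 0%N by have := deg r; rewrite eqxx.
  rewrite big_set0 => /esym/eqP; rewrite mulf_eq0 => /orP[/eqP //|/eqP //].
move=> y x hyx vy.
case: (x =P r) => [->|xr].
  have := hv r; rewrite lap_row sum_in_arcs.
  have /cards0_eq -> : #|[set j | arc j r]| = 0%N by have := deg r; rewrite eqxx.
  rewrite big_set0 => /esym/eqP; rewrite mulf_eq0 => /orP[/eqP //|/eqP //].
have /cards1P [a ha] : #|[set j | arc j x]| == 1%N.
  by rewrite -/(indeg arc x) deg; move/eqP: xr => ->.
have ya : y = a.
  by apply/set1P; rewrite -ha inE.
have := hv x; rewrite lap_row sum_in_arcs ha big_set1 -ya vy subr0.
move/eqP; rewrite -subr_eq0 -{1}(mul1r (v x)) -mulrBl mulf_eq0 subr_eq0.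
by case/orP => [/eqP/esym //|/eqP].
Qed.

Lemma char_poly_conj (F : fieldType) n (E N : 'M[F]_n) : E \in unitmx ->
  char_poly (E *m N *m invmx E) = char_poly N.
Proof.
move=> Eu; rewrite /char_poly /char_poly_mx.
have -> : 'X%:M - map_mx polyC (E *m N *m invmx E) =
    map_mx polyC E *m ('X%:M - map_mx polyC N) *m map_mx polyC (invmx E).
  rewrite mulmxBr mulmxBl !map_mxM; congr (_ - _).
  by rewrite mul_mx_scalar -scalemxAl -map_mxM mulmxV // map_mx1 scalemx1.
by rewrite !det_mulmx mulrAC -det_mulmx -map_mxM mulmxV // map_mx1 det1 mul1r.
Qed.

Lemma rank_X2 (F : fieldType) n (M : 'M[F]_n) : (\rank M + 2 <= n)%N ->
  exists q, char_poly M = 'X^2 * q.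
Proof.
move=> hr; set r := \rank M.
set E := col_ebase M; set G := row_ebase M.
pose N : 'M[F]_n := pid_mx r *m (G *m E).
have EM : M = E *m N *m invmx E.
  by rewrite /N !mulmxA mulmxK ?col_ebase_unit // mulmx_ebase.
have Nz : forall i j : 'I_n, (r <= i)%N -> N i j = 0.
  move=> i j hi; rewrite /N mxE big1 // => k _.
  by rewrite mxE ltnNge hi andbF mul0r.
rewrite EM char_poly_conj ?col_ebase_unit //; clearbody N.
set d := \row_(i < n) (if (r <= i)%N then 'X else 1 : {poly F}).
set K := \matrix_(i < n, j < n)
   (if (r <= i)%N then (i == j)%:R else char_poly_mx N i j).
have cN : char_poly_mx N = diag_mx d *m K.
  apply/matrixP => i j; rewrite mul_diag_mx [RHS]mxE [d 0 i]mxE [K i j]mxE.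
  case: leqP => h; last by rewrite mul1r.
  rewrite /char_poly_mx !mxE Nz //.
  by rewrite polyC0 subr0 mulr_natr.
rewrite /char_poly cN det_mulmx det_diag.
have n2 : (2 <= n)%N by apply: leq_trans hr; rewrite leq_addl.
have h1 : (n.-1 < n)%N by rewrite ltn_predL; apply: leq_trans n2.
have h2 : (n.-2 < n)%N by apply: leq_ltn_trans (leq_pred _) h1.
pose i1 : 'I_n := Ordinal h1.
pose i2 : 'I_n := Ordinal h2.
have i21 : i2 != i1.
  rewrite -val_eqE /= neq_ltn; apply/orP; left.
  by rewrite ltn_predL -ltnS prednK ?(leq_trans _ n2).
have r1 : (r <= n.-2)%N by lia.
rewrite (bigD1 i1) // (bigD1 i2) //= !mxE.
have -> : (r <= i1)%N by rewrite /= (leq_trans r1) // leq_pred.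
have -> : (r <= i2)%N by [].
by eexists; rewrite expr2 -!mulrA.
Qed.

Lemma rank_count0 n (M : 'M[algC]_n) : (\rank M + 2 <= n)%N ->
  (2 <= count_mem (0%R : algC) (eigenvalues M))%N.
Proof.
move=> /rank_X2 [q hq].
rewrite -mu_prod_XsubC -eigenvaluesE mup_geq ?monic_neq0 ?char_poly_monic //.
by rewrite polyC0 subr0 hq dvdp_mulr.
Qed.

Lemma rank_sum_le (F : fieldType) n m (I : finType) (P : pred I)
   (B : I -> 'M[F]_(n, m)) :
  (\rank (\sum_(i | P i) B i)%R <= \sum_(i | P i) \rank (B i))%N.
Proof.
elim/big_rec2: _ => [|i k C _ IH]; first by rewrite mxrank0.
by apply: leq_trans (mxrank_add _ _) _; rewrite leq_add2l.
Qed.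

Lemma rank_rows (F : fieldType) n m (A : 'M[F]_(n, m)) (T : {set 'I_n}) :
  (forall i j, i \notin T -> A i j = 0) -> (\rank A <= #|T|)%N.
Proof.
move=> hA.
have -> : A = \sum_(i in T) (delta_mx i 0 *m row i A : 'M[F]_(n, m)).
  apply/matrixP => k j; rewrite summxE.
  under eq_bigr => i _ do rewrite mxE big_ord1 !mxE.
  case: (boolP (k \in T)) => kT.
    rewrite (bigD1 k) //= !eqxx mul1r big1 ?addr0 // => i /andP[_ /negbTE].
    by rewrite eq_sym => ->; rewrite mul0r.
  rewrite hA // big1 // => i iT; case: eqP => [ki|]; last by rewrite mul0r.
  by move: kT; rewrite ki iT.
apply: leq_trans (rank_sum_le _ _) _.
rewrite -sum1_card; apply: leq_sum => i _.
by apply: leq_trans (mxrankM_maxl _ _) _; apply: rank_leq_col.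
Qed.

Definition pclosed n (arc : rel 'I_n) (S : {set 'I_n}) :=
  forall i j, arc j i -> i \in S -> j \in S.

Lemma lap_out n (arc : rel 'I_n) S i j : pclosed arc S -> i \in S -> j \notin S ->
  laplacian arc i j = 0.
Proof.
move=> hS iS jS; rewrite mxE.
have -> : (i == j) = false by apply/eqP => ij; move: jS; rewrite -ij iS.
have -> : arc j i = false by apply/negP => /hS /(_ iS); apply/negP.
by rewrite mulr0n subr0.
Qed.

Lemma lap_rowsum n (arc : rel 'I_n) i : \sum_j laplacian arc i j = 0.
Proof.
have := lap_row arc i (fun _ => 1); under eq_bigr do rewrite mulr1.
by move=> ->; rewrite big1 // => j _; rewrite subrr.
Qed.

Lemma lap_helper n (arc : rel 'I_n) S c i j (f : 'I_n -> algC) :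
  pclosed arc S -> i \in S ->
  (forall k, k \in S -> f k = (k == j)%:R - (j == c)%:R) ->
  \sum_k laplacian arc i k * f k = laplacian arc i j.
Proof.
move=> hS iS hf.
rewrite (eq_bigr (fun k => laplacian arc i k * ((k == j)%:R - (j == c)%:R))); last first.
  move=> k _; case: (boolP (k \in S)) => kS; first by rewrite hf.
  by rewrite (lap_out hS iS kS) !mul0r.
under eq_bigr do rewrite mulrBr.
rewrite sumrB -mulr_suml lap_rowsum mul0r subr0.
rewrite (bigD1 j) //= eqxx mulr1 big1 ?addr0 // => k /negbTE ->.
by rewrite mulr0.
Qed.

Lemma lap_rank n (arc : rel 'I_n) (S1 S2 : {set 'I_n}) c1 c2 :
  pclosed arc S1 -> pclosed arc S2 -> c1 \in S1 -> c2 \in S2 ->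
  S1 :&: S2 = set0 -> (\rank (laplacian arc) + 2 <= n)%N.
Proof.
move=> h1 h2 c1S c2S dis.
have d12 : forall k, k \in S1 -> k \in S2 -> False.
  move=> k k1 k2; have : k \in S1 :&: S2 by rewrite inE k1 k2.
  by rewrite dis inE.
set L := laplacian arc.
set U := S1 :|: S2.
pose A : 'M[algC]_n := \matrix_(i, j) (if i \in U then 0 else L i j).
pose B : 'M[algC]_n := \matrix_(i, j) (if i \in U then L i j else 0).
pose Q : 'M[algC]_n := \matrix_(i, j)
  ((i \in S1)%:R * ((i == j)%:R - (j == c1)%:R) +
   (i \in S2)%:R * ((i == j)%:R - (j == c2)%:R)).
have eL : L = A + B.
  by apply/matrixP => i j; rewrite !mxE; case: (i \in U); rewrite ?add0r ?addr0.
have eB : B = B *m Q.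
  apply/matrixP => i j; rewrite [B i j]mxE [(B *m Q) i j]mxE.
  case: (boolP (i \in U)) => iU; last first.
    by rewrite big1 // => k _; rewrite mxE (negbTE iU) mul0r.
  under eq_bigr do rewrite [B _ _]mxE iU.
  move: iU; rewrite inE => /orP[i1|i2].
    symmetry; apply: (lap_helper (S := S1) (c := c1)) => // k k1.
    rewrite mxE k1; have -> : (k \in S2) = false.
      by apply/negP => k2; apply: (d12 k).
    by rewrite mul1r mul0r addr0.
  symmetry; apply: (lap_helper (S := S2) (c := c2)) => // k k2.
  rewrite mxE k2; have -> : (k \in S1) = false.
    by apply/negP => k1; apply: (d12 k).
  by rewrite mul1r mul0r add0r.
have rA : (\rank A <= #|~: U|)%N.
  apply: rank_rows => i j; rewrite inE negbK => iU.
  by rewrite mxE iU.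
have rQ : (\rank Q <= #|U :\ c1 :\ c2|)%N.
  apply: rank_rows => i j; rewrite !inE negb_and negb_and negbK negbK.
  rewrite mxE.
  case/orP => [/eqP ->|/orP[/eqP ->|iU]].
  - have -> : (c2 \in S1) = false by apply/negP => h; apply: (d12 c2).
    by rewrite c2S eq_sym subrr mul0r mulr0 addr0.
  - have -> : (c1 \in S2) = false by apply/negP => h; apply: (d12 c1).
    by rewrite c1S eq_sym subrr mul0r mulr0 addr0.
  - move: iU; rewrite negb_or => /andP[/negbTE -> /negbTE ->].
    by rewrite !mul0r addr0.
have rB : (\rank B <= \rank Q)%N by rewrite eB mxrankM_maxr.
have cU : #|U| = (#|U :\ c1 :\ c2|).+2.
  rewrite (cardsD1 c1 U) (cardsD1 c2 (U :\ c1)) !inE c1S c2S.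
  have ne : (c2 != c1) by apply/eqP => e; apply: (d12 c2) => //; rewrite e.
  by rewrite ne /= !orbT.
have cC := cardsC U; rewrite card_ord in cC.
rewrite eL; apply: leq_trans (leq_add (mxrank_add _ _) (leqnn 2)) _.
lia.
Qed.

Lemma nonrooted_sets n (arc : rel 'I_n) (v0 : 'I_n) : ~ rooted arc ->
  exists S1 S2 c1 c2, [/\ pclosed arc S1, pclosed arc S2, c1 \in S1, c2 \in S2 &
    S1 :&: S2 = set0].
Proof.
move=> nr.
pose Anc v := [set u | connect arc u v].
have pc : forall v, pclosed arc (Anc v).
  move=> v i j hji; rewrite !inE => hi.
  by apply: connect_trans hi; apply: connect1.
case: (@arg_minnP _ v0 xpredT (fun v => #|Anc v|)) => // v1 _ hmin.
have back : forall u, u \in Anc v1 -> connect arc v1 u.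
  move=> u hu.
  have sub : Anc u \subset Anc v1.
    apply/subsetP => w; rewrite !inE => hw; rewrite inE in hu.
    exact: connect_trans hw hu.
  have /eqP eq : Anc u == Anc v1 by rewrite eqEcard sub hmin.
  have : v1 \in Anc u by rewrite eq inE connect0.
  by rewrite inE.
have [w hw] : exists w, ~~ connect arc v1 w.
  apply/existsP; rewrite -negb_forall; apply/negP => /forallP h.
  by apply: nr; exists v1 => v; apply: h.
exists (Anc v1), (Anc w), v1, w; split => //; rewrite ?inE ?connect0 //.
apply/setP => u; rewrite !inE; apply/negP => /andP[h1 h2].
have := back u; rewrite inE => /(_ h1) h3.
by move: hw; rewrite (connect_trans h3 h2).
Qed.

Lemma sum_ge_const (t : seq algC) c : (forall y, y \in t -> c <= y) ->
  c *+ size t <= \sum_(y <- t) y.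
Proof.
elim: t => [|a t IH] h; first by rewrite big_nil mulr0n.
rewrite big_cons /= mulrS; apply: lerD; first by apply: h; rewrite inE eqxx.
by apply: IH => y yt; apply: h; rewrite inE yt orbT.
Qed.

Lemma sum_le_const (t : seq algC) c : (forall y, y \in t -> y <= c) ->
  \sum_(y <- t) y <= c *+ size t.
Proof.
elim: t => [|a t IH] h; first by rewrite big_nil mulr0n.
rewrite big_cons /= mulrS; apply: lerD; first by apply: h; rewrite inE eqxx.
by apply: IH => y yt; apply: h; rewrite inE yt orbT.
Qed.

Section ListLemmas.
Variables (n : nat) (s : seq algC).
Hypotheses (hn : (2 <= n)%N) (hsz : size s = n) (hsort : sorted <=%R s)
  (hnn : forall x, x \in s -> 0 <= x) (hsum : \sum_(x <- s) x = (n.-1)%:R).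

Lemma list_shape : exists x0 x1 t, [/\ s = x0 :: x1 :: t, x0 <= x1,
   forall y, y \in t -> x1 <= y & size t = n.-2].
Proof.
case: s hsz hsort => [|x0 [|x1 t]] //= hs; try by move: hn; rewrite -hs.
case/andP => h01 pt; exists x0, x1, t; split => //.
  by move=> y; apply/allP; apply: order_path_min pt; apply: le_trans.
by rewrite -hs.
Qed.

Lemma L1 : nth 0 s 1 <= 1.
Proof.
have [x0 [x1 [t [es h01 ht st]]]] := list_shape.
rewrite es /=.
have x0p : 0 <= x0 by apply: hnn; rewrite es inE eqxx.
have : x1 *+ (n.-1) <= (n.-1)%:R.
  rewrite -hsum es !big_cons.
  have -> : n.-1 = (size t).+1 by rewrite st; lia.
  rewrite mulrS -[X in X <= _]add0r; apply: lerD => //; apply: lerD => //.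
  exact: sum_ge_const.
rewrite lerMn2r => /orP[/eqP|//]; lia.
Qed.

Lemma L2 : (forall x, x \in s -> x = 0 \/ x = 1) -> nth 0 s 1 = 1.
Proof.
move=> h01.
have [x0 [x1 [t [es le01 ht st]]]] := list_shape.
rewrite es /=.
have x0p : 0 <= x0 by apply: hnn; rewrite es inE eqxx.
have : x1 = 0 \/ x1 = 1 by apply: h01; rewrite es !inE eqxx !orbT.
case=> [x10|->]; last by [].
rewrite x10.
  have x00 : x0 = 0 by apply/le_anti; rewrite x0p andbT -x10.
  have : \sum_(y <- t) y <= 1 *+ size t.
    apply: sum_le_const => y yt.
    by have [->|->] : y = 0 \/ y = 1 by apply: h01; rewrite es !inE yt !orbT.
  move: hsum; rewrite es !big_cons x00 x10 !add0r => ->; rewrite st ler_nat; lia.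
Qed.

Lemma L3 : (2 <= count_mem (0%R : algC) s)%N -> nth 0 s 1 = 0.
Proof.
move=> hc.
have [x0 [x1 [t [es le01 ht st]]]] := list_shape.
rewrite es /=.
have x1p : 0 <= x1 by apply: hnn; rewrite es !inE eqxx orbT.
case: (x1 =P 0) => // /eqP x1n.
have x1pos : 0 < x1 by rewrite lt_def x1n x1p.
have : 0 \notin t.
  by apply/negP => /ht h; have := lt_le_trans x1pos h; rewrite ltxx.
move/count_memPn => ct.
move: hc; rewrite es /= ct addn0.
have -> : (x1 == 0) = false by apply/negbTE.
by case: (x0 == 0).
Qed.
End ListLemmas.

Section Main.
Variables (n : nat) (arc : rel 'I_n).
Hypotheses (hn : (2 <= n)%N) (hs : simple_digraph arc) (hm : num_arcs arc = n.-1).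

Let L := laplacian arc.
Let es := eigenvalues L.
Let s := sorted_re_eigs L.

Lemma s_perm : perm_eq s [seq 'Re z | z <- es].
Proof. exact: permEl (perm_sort _ _). Qed.

Lemma s_size : size s = n.
Proof. by rewrite (perm_size s_perm) size_map size_eigenvalues. Qed.

Lemma s_sorted : sorted <=%R s.
Proof.
apply: (sort_sorted_in (P := Num.real)).
  by move=> x y xr yr; apply: real_leVge.
by apply/allP => x /mapP [z _ ->]; apply: Creal_Re.
Qed.

Lemma s_nn x : x \in s -> 0 <= x.
Proof.
rewrite (perm_mem s_perm) => /mapP [z zin ->].
have [v vn hv] := eigvec zin.
exact: gersh vn hv.
Qed.

Lemma s_sum : \sum_(x <- s) x = (n.-1)%:R.
Proof.
rewrite (perm_big _ s_perm) big_map -raddf_sum /= sum_eigenvalues.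
  rewrite trace_lap // hm; apply/Creal_ReP; apply: realn.
by apply: leq_trans hn.
Qed.

Lemma main_le : alg_connectivity arc <= 1.
Proof. exact: (L1 hn s_size s_sorted s_nn s_sum). Qed.

Lemma main_tree : directed_tree arc -> alg_connectivity arc = 1.
Proof.
case=> [[r hr] _]; apply: (L2 hn s_size s_sorted s_nn s_sum).
move=> x; rewrite (perm_mem s_perm) => /mapP [z zin ->].
have [v vn hv] := eigvec zin.
have [->|->] := tree_eig hr hm vn hv.
  by left; rewrite (Creal_ReP _ (rpred0 _)).
by right; rewrite (Creal_ReP _ (rpred1 _)).
Qed.

Lemma main_conv : alg_connectivity arc = 1 -> directed_tree arc.
Proof.
move=> h; split => //.
have v0 : 'I_n by exists 0%N; apply: leq_trans hn.
case: (boolP [exists r, [forall v, connect arc r v]]).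
  by case/existsP => r /forallP hr; exists r.
move=> hnr.
have nr : ~ rooted arc.
  case=> r hr; move/negP: hnr; apply; apply/existsP; exists r.
  by apply/forallP.
have [S1 [S2 [c1 [c2 [h1 h2 c1S c2S dis]]]]] := nonrooted_sets v0 nr.
have hr := lap_rank h1 h2 c1S c2S dis.
have hc := rank_count0 hr.
have hc' : (2 <= count_mem (0%R : algC) s)%N.
  rewrite (permP s_perm) count_map; apply: leq_trans hc _.
  apply: sub_count => z /= /eqP ->; by rewrite (Creal_ReP _ (rpred0 _)).
move: h; rewrite /alg_connectivity -/s (L3 hn s_size s_sorted s_nn hc').
by move/eqP; rewrite eq_sym oner_eq0.
Qed.
End Main.

Unset Implicit Arguments.

Theorem theorem1 (n : nat) (hn : (2 <= n)%N) :
  (* the maximum of the algebraic connectivity over the class is 1 *)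
  ((forall arc : rel 'I_n, simple_digraph arc -> num_arcs arc = n.-1 ->
      alg_connectivity arc <= 1) /\
   (exists arc : rel 'I_n, [/\ simple_digraph arc, num_arcs arc = n.-1 &
      alg_connectivity arc = 1])) /\
  (* characterization of the extremal graphs *)
  (forall arc : rel 'I_n, simple_digraph arc -> num_arcs arc = n.-1 ->
      (alg_connectivity arc = 1 <-> directed_tree arc)).
Proof.
have iff : forall arc : rel 'I_n, simple_digraph arc -> num_arcs arc = n.-1 ->
      (alg_connectivity arc = 1 <-> directed_tree arc).
  by move=> arc hs hm; split; [apply: main_conv | apply: main_tree].
split => //; split; first by move=> arc hs hm; apply: main_le.
have n0 : (0 < n)%N by apply: leq_trans hn.
pose i0 : 'I_n := Ordinal n0.
pose star := fun j i : 'I_n => (j == i0) && (i != i0).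
have hs : simple_digraph star.
  by move=> i; rewrite /star; case: eqP => // ->; rewrite eqxx.
have hm : num_arcs star = n.-1.
  rewrite num_arcsE.
  transitivity (\sum_i (i != i0 : nat))%N.
    apply: eq_bigr => i _.
    have E : [set j | star j i] = if i == i0 then set0 else [set i0].
      apply/setP => j; rewrite !inE /star.
      by case: (i == i0); rewrite ?inE ?andbF ?andbT.
    by rewrite /indeg E; case: (i == i0); rewrite ?cards0 ?cards1.
  rewrite -card_set_sum.
  have -> : [set x | x != i0] = [set~ i0] by apply/setP=> x; rewrite !inE.
  by rewrite cardsC1 card_ord.
exists star; split => //; apply/(iff _ hs hm); split => //.
exists i0 => v; case: (v =P i0) => [->|ne]; first exact: connect0.
by apply: connect1; rewrite /star eqxx; apply/eqP.
Qed.
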